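(* Let $R$ be an associative ring with identity and let $\mathbf{L}$ be an exact sequence (unbounded in both directions) of finitely generated free left $R$-modules. The following are equivalent: (1) $\mathbf{L}$ is a complete resolution by finitely generated free left $R$-modules, i.e. the complex $\mathrm{Hom}_R(\mathbf{L},R)$ is exact; (2) $\mathbf{L}$ is a complete projective resolution, i.e. $\mathrm{Hom}_R(\mathbf{L},Q)$ is exact for every projective left $R$-module $Q$; (3) $\mathbf{L}$ is a complete flat resolution, i.e. $I\otimes_R\mathbf{L}$ is exact for every injective right $R$-module $I$. *)

(* Defs.v *)
From HB Require Import structures.
From mathcomp Require Import all_boot all_algebra.
Set Implicit Arguments. Unset Strict Implicit. Unset Printing Implicit Defensive.
Import GRing.Theory.
Local Open Scope ring_scope.

(* A complex of finitely generated free left R-modules, unbounded in both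
   directions: L_i = R^(n i) (row vectors 'rV[R]_(n i)), differential
   d_{i+1} : L_{i+1} -> L_i given by v |-> v *m D i  (left R-linear maps
   R^a -> R^b are exactly right multiplications by a x b matrices). *)

Definition exact_free (R : pzRingType) (n : int -> nat)
    (D : forall i : int, 'M[R]_(n (i + 1), n i)) : Prop :=
  forall i : int,
    (forall u : 'rV[R]_(n (i + 1 + 1)), (u *m D (i + 1)) *m D i = 0) /\
    (forall v : 'rV[R]_(n (i + 1)), v *m D i = 0 ->
       exists u : 'rV[R]_(n (i + 1 + 1)), u *m D (i + 1) = v).

Definition Rlinear (R : pzRingType) (M N : lmodType R) (f : M -> N) : Prop :=
  forall (a : R) (x y : M), f (a *: x + y) = a *: f x + f y.

Definition hom_exact (R : pzRingType) (n : int -> nat)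
    (D : forall i : int, 'M[R]_(n (i + 1), n i)) (Q : lmodType R) : Prop :=
  forall i : int,
    (forall f : 'rV[R]_(n i) -> Q, Rlinear f ->
       forall u : 'rV[R]_(n (i + 1 + 1)), f ((u *m D (i + 1)) *m D i) = 0) /\
    (forall g : 'rV[R]_(n (i + 1)) -> Q, Rlinear g ->
       (forall u : 'rV[R]_(n (i + 1 + 1)), g (u *m D (i + 1)) = 0) ->
       exists f : 'rV[R]_(n i) -> Q, Rlinear f /\
         forall v : 'rV[R]_(n (i + 1)), g v = f (v *m D i)).

Definition projective_lmod (R : pzRingType) (Q : lmodType R) : Prop :=
  forall (M N : lmodType R) (p : M -> N) (g : Q -> N),
    Rlinear p -> (forall y : N, exists x : M, p x = y) -> Rlinear g ->
    exists h : Q -> M, Rlinear h /\ forall q : Q, p (h q) = g q.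

(* Right R-modules are left modules over the converse ring R^c:
   the right action x.r is written (r : R^c) *: x. *)
Definition injective_rmod (R : pzRingType) (I : lmodType R^c) : Prop :=
  forall (M N : lmodType R^c) (j : M -> N) (g : M -> I),
    Rlinear j -> injective j -> Rlinear g ->
    exists h : N -> I, Rlinear h /\ forall m : M, h (j m) = g m.

(* I (x)_R L, using I (x)_R R^k = I^k: the differential
   I^(n (i+1)) -> I^(n i) is x |-> (j |-> sum_k x_k . D i k j). *)
Definition tens_map (R : pzRingType) (I : lmodType R^c) (a b : nat)
    (A : 'M[R]_(a, b)) (x : 'I_a -> I) : 'I_b -> I :=
  fun j => \sum_(k < a) (A k j : R^c) *: x k.

Definition tensor_exact (R : pzRingType) (n : int -> nat)
    (D : forall i : int, 'M[R]_(n (i + 1), n i)) (I : lmodType R^c) : Prop :=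
  forall i : int,
    (forall u : 'I_(n (i + 1 + 1)) -> I,
       forall j, tens_map (D i) (tens_map (D (i + 1)) u) j = 0) /\
    (forall x : 'I_(n (i + 1)) -> I, (forall j, tens_map (D i) x j = 0) ->
       exists u : 'I_(n (i + 1 + 1)) -> I,
         forall k, tens_map (D (i + 1)) u k = x k).

(* Main.v *)
Require Import Defs.
From HB Require Import structures.
From mathcomp Require Import all_boot all_order all_algebra.
From mathcomp Require Import ring lra zify.
From mathcomp Require boolp classical_sets.
From Stdlib Require Import Classical ClassicalEpsilon.
Set Implicit Arguments. Unset Strict Implicit. Unset Printing Implicit Defensive.
Import GRing.Theory Num.Theory Order.TTheory.
Local Open Scope ring_scope.

Definition frac (x : rat) : rat := x - (Num.floor x)%:~R.

Lemma frac_ge0 x : 0 <= frac x.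
Proof. by rewrite /frac subr_ge0 Num.Theory.floor_le. Qed.
Lemma frac_lt1 x : frac x < 1.
Proof. rewrite /frac ltrBlDr. have := floorD1_gt x. by rewrite intrD addrC. Qed.

Lemma fracDz x (m : int) : frac (x + m%:~R) = frac x.
Proof. rewrite /frac floorDrz ?intr_int // intrKfloor intrD; lra. Qed.

Lemma frac_id x : 0 <= x < 1 -> frac x = x.
Proof.
move=> hx; rewrite /frac (_ : Num.floor x = 0) ?subr0 //.
by apply: floor_def; rewrite add0r hx.
Qed.

Lemma fracfrac x y : frac (frac x + y) = frac (x + y).
Proof.
have -> : frac x + y = (x + y) + (- Num.floor x)%:~R by rewrite /frac intrN; lra.
by rewrite fracDz.
Qed.

Record qz := QZ { qzv : rat; qzP : (0 <= qzv) && (qzv < 1) }.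
HB.instance Definition _ := [isSub for qzv].
HB.instance Definition _ := [Countable of qz by <:].

Definition qzf (x : rat) : qz := @QZ (frac x) (andb_true_intro (conj (frac_ge0 x) (frac_lt1 x))).

Lemma qzfK (a : qz) : qzf (qzv a) = a.
Proof. by apply: val_inj; rewrite /= frac_id // qzP. Qed.

Lemma qzf_eq x y : frac x = frac y -> qzf x = qzf y.
Proof. by move=> e; apply: val_inj. Qed.

Definition qzadd (a b : qz) := qzf (qzv a + qzv b).
Definition qzopp (a : qz) := qzf (- qzv a).
Definition qz0 := qzf 0.

Lemma qzaddA : associative qzadd.
Proof.
move=> a b c; apply: qzf_eq => /=.
by rewrite fracfrac addrC fracfrac [X in frac X]addrC addrA.
Qed.
Lemma qzaddC : commutative qzadd.
Proof. by move=> a b; rewrite /qzadd addrC. Qed.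
Lemma qzadd0 : left_id qz0 qzadd.
Proof. by move=> a; rewrite /qzadd /qz0 /= frac_id ?lexx ?ltr01 // add0r qzfK. Qed.
Lemma qzaddN : left_inverse qz0 qzopp qzadd.
Proof. by move=> a; apply: qzf_eq; rewrite /= fracfrac addNr. Qed.

HB.instance Definition _ := GRing.isZmodule.Build qz qzaddA qzaddC qzadd0 qzaddN.

Lemma qzfD x y : qzf (x + y) = qzf x + qzf y.
Proof. apply: qzf_eq; change (frac (x + y) = frac (frac x + frac y)). by rewrite fracfrac [x + frac y]addrC fracfrac addrC. Qed.
Lemma qzf0 : qzf 0 = 0. Proof. by []. Qed.
Lemma qzfN x : qzf (- x) = - qzf x.
Proof.
apply: qzf_eq; change (frac (- x) = frac (- frac x)).
have -> : - frac x = - x + (Num.floor x)%:~R by rewrite /frac; lra.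
by rewrite fracDz.
Qed.

Lemma qzfB : zmod_morphism qzf.
Proof. by move=> x y; rewrite qzfD qzfN. Qed.
HB.instance Definition _ := GRing.isZmodMorphism.Build rat qz qzf qzfB.

Lemma qzf_int (m : int) : qzf m%:~R = 0.
Proof. by apply: val_inj; rewrite /= -[m%:~R]add0r fracDz frac_id ?lexx ?ltr01. Qed.

Lemma qz_div (a : qz) (d : nat) : (0 < d)%N -> exists b : qz, b *+ d = a.
Proof.
move=> d0; exists (qzf (qzv a / d%:R)); rewrite -raddfMn /=.
have dn : (d%:R : rat) != 0 by rewrite pnatr_eq0 -lt0n.
have -> : qzv a / d%:R *+ d = qzv a by rewrite -[in LHS]mulr_natr mulfVK.
exact: qzfK.
Qed.

Lemma qz_tor (d : nat) : d != 1%N -> exists xi : qz, xi != 0 /\ xi *+ d = 0.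
Proof.
move=> d1; case: d d1 => [|d] d1.
  by exists (qzf (1/2)); split.
have d2 : (1 < d.+1)%N by case: d d1.
have dr : (1 < (d.+1)%:R :> rat) by rewrite ltr1n.
exists (qzf (1 / d.+1%:R)); split.
  apply/eqP; move/(congr1 val); change (frac (1 / d.+1%:R) = frac 0 -> False).
  rewrite !frac_id ?lexx ?ltr01 //.
    by move/eqP; rewrite mul1r invr_eq0 pnatr_eq0.
  rewrite mul1r invr_ge0 ler0n /= invf_lt1 //; lra.
rewrite -raddfMn /=.
have -> : 1 / d.+1%:R *+ d.+1 = (1%:~R : rat) by rewrite -[in LHS]mulr_natr mul1r mulVf ?pnatr_eq0.
exact: qzf_int.
Qed.

Definition asb (P : Prop) : bool := if excluded_middle_informative P then true else false.
Lemma asbP (P : Prop) : reflect P (asb P).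
Proof. by rewrite /asb; case: excluded_middle_informative => h; constructor. Qed.

Section Subgroups.
Variable N : zmodType.

Definition subgrp (S : N -> Prop) := S 0 /\ forall x y, S x -> S y -> S (x - y).

Lemma subgrpN S x : subgrp S -> S x -> S (- x).
Proof. by move=> [S0 SB] Sx; rewrite -sub0r; apply: SB. Qed.
Lemma subgrpD S x y : subgrp S -> S x -> S y -> S (x + y).
Proof. by move=> hS Sx Sy; rewrite -[y]opprK; apply: hS.2 => //; apply: subgrpN. Qed.
Lemma subgrpMz S x (t : int) : subgrp S -> S x -> S (x *~ t).
Proof.
move=> hS Sx; have hn : forall n : nat, S (x *+ n).
  elim=> [|n IH]; first by rewrite mulr0n; exact: hS.1.
  by rewrite mulrS; apply: subgrpD.
by case: t => n; [exact: hn | rewrite NegzE mulrNz; apply: subgrpN => //; exact: hn].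
Qed.
End Subgroups.

Lemma int_subgrp (J : int -> Prop) : subgrp J ->
  exists d : nat, J d%:Z /\ forall t, J t -> exists q : int, t = q * d%:Z.
Proof.
move=> hJ.
case: (classic (exists n : nat, (0 < n)%N /\ J n%:Z)) => [ex|nex].
  have ex' : exists n : nat, (0 < n)%N && asb (J n%:Z).
    by case: ex => n [n0 Jn]; exists n; rewrite n0 /=; apply/asbP.
  case: (ex_minnP ex') => d /andP [d0 /asbP Jd] dmin.
  exists d; split => // t Jt; exists (t %/ d)%Z.
  have dz : d%:Z != 0 by rewrite eqz_nat -lt0n.
  have Jr : J (t %% d)%Z.
    have -> : (t %% d)%Z = t - (d%:Z *~ (t %/ d)%Z).
      rewrite -mulrzr intz mulrC; lia.
    by apply: hJ.2 => //; apply: subgrpMz.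
  have Jr' : J (`|(t %% d)%Z|%N : int) by rewrite gez0_abs //; lia.
  case: (posnP `|(t %% d)%Z|%N) => [r0|rpos].
    move: r0 => /eqP; rewrite -eqz_nat gez0_abs; [move/eqP=> r0 | lia].
    by rewrite {1}(divz_eq t d) r0 addr0.
  have := dmin _ (introT andP (conj rpos (introT (asbP _) Jr'))); lia.
exists 0%N; split; first exact: hJ.1.
move=> t Jt; exists 0; rewrite mulr0.
case: (ltgtP t 0) => // [tn|tp].
  case: nex; exists `|t|%N; split; first lia.
  by rewrite ltz0_abs //; apply: subgrpN.
by case: nex; exists `|t|%N; split; [lia | rewrite gtz0_abs].
Qed.

Section QZinj.
Variable N : zmodType.
Local Notation T := (N * qz)%type.

Definition grp (G : T -> Prop) :=
  G (0, 0) /\ forall x a y b, G (x, a) -> G (y, b) -> G (x - y, a - b).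
Definition fun0 (G : T -> Prop) := forall a, G (0, a) -> a = 0.

Lemma grpN G x a : grp G -> G (x, a) -> G (- x, - a).
Proof. by move=> [G0 GB] Gx; rewrite -sub0r -[- a]sub0r; apply: GB. Qed.
Lemma grpD G x a y b : grp G -> G (x, a) -> G (y, b) -> G (x + y, a + b).
Proof.
move=> hG Gx Gy; rewrite -[y]opprK -[b]opprK; apply: hG.2 => //; exact: grpN.
Qed.
Lemma grpMz G x a (t : int) : grp G -> G (x, a) -> G (x *~ t, a *~ t).
Proof.
move=> hG Gx; have hn : forall n : nat, G (x *+ n, a *+ n).
  elim=> [|n IH]; first by rewrite !mulr0n; exact: hG.1.
  by rewrite !mulrS; apply: grpD.
by case: t => n; [exact: hn | rewrite NegzE !mulrNz; apply: grpN => //; exact: hn].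
Qed.
Lemma grp_fun G x a b : grp G -> fun0 G -> G (x, a) -> G (x, b) -> a = b.
Proof.
move=> hG hf Ga Gb; apply/eqP; rewrite -subr_eq0; apply/eqP/hf.
by rewrite -(subrr x); apply: hG.2.
Qed.

Lemma grp_step G y : grp G -> fun0 G -> exists xi : qz, forall t b, G (y *~ t, b) -> b = xi *~ t.
Proof.
move=> hG hf.
have hJ : subgrp (fun t => exists b, G (y *~ t, b)).
  split; first by exists 0; rewrite mulr0z; exact: hG.1.
  move=> t1 t2 [b1 G1] [b2 G2]; exists (b1 - b2); rewrite mulrzBr; exact: hG.2.
case: (int_subgrp hJ) => d [[bd Gd] hd].
case: (posnP d) => [d0|dpos].
  exists 0 => t b Gb; case: (hd t (ex_intro _ b Gb)) => q tq.
  move: Gb; rewrite tq d0 mulr0 mulr0z mul0rz; exact: hf.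
case: (qz_div bd dpos) => xi hxi; exists xi => t b Gb.
case: (hd t (ex_intro _ b Gb)) => q tq.
have G' := grpMz q hG Gd.
rewrite -mulrzA [d%:Z * q]mulrC -tq in G'.
rewrite (grp_fun hG hf Gb G') -hxi tq mulrC mulrzA.
done.
Qed.

Definition gext G y xi : T -> Prop := fun p =>
  exists x a (t : int), G (x, a) /\ p = (x + y *~ t, a + xi *~ t).

Lemma gext_grp G y xi : grp G -> grp (gext G y xi).
Proof.
move=> hG; split; first by exists 0, 0, 0; split; [exact: hG.1 | rewrite !mulr0z !addr0].
move=> x1 a1 x2 b2 [u1 [c1 [t1 [G1 e1]]]] [u2 [c2 [t2 [G2 e2]]]].
case: e1 => -> ->; case: e2 => -> ->.
exists (u1 - u2), (c1 - c2), (t1 - t2); split; first exact: hG.2.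
by rewrite !mulrzBr; congr (_, _); rewrite opprD !addrA; congr (_ - _); rewrite addrAC.
Qed.

Lemma gext_fun0 G y xi : grp G -> fun0 G ->
  (forall t b, G (y *~ t, b) -> b = xi *~ t) -> fun0 (gext G y xi).
Proof.
move=> hG hf hxi c [x [a [t [Ga e]]]]; case: e => ex ec.
have ex' : x = y *~ (- t) by rewrite mulrNz; apply/eqP; rewrite -addr_eq0 -ex.
rewrite ex' in Ga; rewrite ec (hxi _ _ Ga) mulrNz addNr //.
Qed.
End QZinj.

Lemma qz_inj (N : zmodType) (S0 : N -> Prop) (h0 : N -> qz) :
  subgrp S0 -> (forall x y, S0 x -> S0 y -> h0 (x - y) = h0 x - h0 y) ->
  exists H : N -> qz, (forall x y, H (x - y) = H x - H y) /\
     forall s, S0 s -> H s = h0 s.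
Proof.
move=> hS hh.
pose ext (G : N * qz -> Prop) := forall s, S0 s -> G (s, h0 s).
pose good G := [/\ grp G, fun0 G & ext G].
pose P (G : N * qz -> Prop) := (forall p, ~ G p) \/ good G.
have PG X p : P X -> X p -> good X by case=> // /(_ p).
have G0 : good (fun p => S0 p.1 /\ p.2 = h0 p.1).
  split.
  - split; first by split; [exact: hS.1 | rewrite -(subrr 0) hh ?subrr //; exact: hS.1].
    move=> x a y b /= [Sx ->] [Sy ->]; split; [exact: hS.2 | by rewrite hh].
  - move=> a /= [_ ->]; rewrite -(subrr 0) hh ?subrr //; exact: hS.1.
  - by move=> s Ss.
have [A [PA Amax]] : exists A, P A /\ forall B, classical_sets.proper A B -> ~ P B.
  apply: classical_sets.Zorn_bigcup => F FP Ftot.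
  case: (classic (exists X p, F X /\ X p)) => [[X0 [p0 [FX0 Xp0]]]|ne]; last first.
    by left => p [X FX Xp]; apply: ne; exists X, p.
  have gX0 := PG _ _ (FP _ FX0) Xp0.
  have gF X p : F X -> X p -> good X by move=> FX Xp; exact: (PG _ _ (FP _ FX) Xp).
  right; split.
  - split; first by exists X0 => //; case: gX0 => -[]. 
    move=> x a y b [X1 F1 X1x] [X2 F2 X2y].
    case: (Ftot _ _ F1 F2) => sub.
      exists X2 => //; case: (gF _ _ F2 X2y) => -[_ hB] _ _; apply: hB => //; exact: sub.
    exists X1 => //; case: (gF _ _ F1 X1x) => -[_ hB] _ _; apply: hB => //; exact: sub.
  - move=> a [X FX Xa]; case: (gF _ _ FX Xa) => _ hf _; exact: hf.
  - by move=> s Ss; exists X0 => //; case: gX0 => _ _; apply.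
have gA : good A.
  case: PA => // Aempty; exfalso; apply: (Amax _ _ (or_intror G0)); split.
    by move=> p /Aempty.
  move=> /(_ (0, h0 0)) h; apply: (Aempty (0, h0 0)); apply: h; split=> //; exact: hS.1.
case: gA => hg hf hext.
have hall : forall y, exists b, A (y, b).
  move=> y; apply: NNPP => nb.
  case: (grp_step y hg hf) => xi hxi.
  apply: (Amax (gext A y xi)); last first.
    right; split; [exact: gext_grp | exact: gext_fun0 | ].
    move=> s Ss; exists s, (h0 s), 0; split; [exact: hext | by rewrite !mulr0z !addr0].
  split.
    by move=> [x a] Ax; exists x, a, 0; split=> //; rewrite !mulr0z !addr0.
  move=> /(_ (y, xi)) h; apply: nb; exists xi; apply: h.
  by exists 0, 0, 1; split; [exact: hg.1 | rewrite !add0r].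
pose H y := proj1_sig (constructive_indefinite_description _ (hall y)).
have HA y : A (y, H y) by rewrite /H; case: constructive_indefinite_description.
exists H; split.
  move=> x y; apply: (grp_fun hg hf (HA _)); exact: hg.2.
move=> s Ss; exact: (grp_fun hg hf (HA _) (hext _ Ss)).
Qed.

Lemma qz_inj_graph (N : zmodType) (G : N * qz -> Prop) :
  grp G -> fun0 G ->
  exists H : N -> qz, (forall x y, H (x - y) = H x - H y) /\ forall x a, G (x, a) -> H x = a.
Proof.
move=> hg hf.
pose S0 x := exists a, G (x, a).
pose h0 x : qz := match excluded_middle_informative (S0 x) with
  | left e => proj1_sig (constructive_indefinite_description _ e) | right _ => 0 end.
have h0E x a : G (x, a) -> h0 x = a.
  move=> Gx; rewrite /h0; destruct (excluded_middle_informative _) as [e|ne]; last by case: ne; exists a.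
  case: constructive_indefinite_description => b /= Gb; exact: (grp_fun hg hf Gb Gx).
have hS : subgrp S0.
  split; first by exists 0; exact: hg.1.
  by move=> x y [a Ga] [b Gb]; exists (a - b); exact: hg.2.
have hh x y : S0 x -> S0 y -> h0 (x - y) = h0 x - h0 y.
  move=> [a Ga] [b Gb]; rewrite (h0E _ _ Ga) (h0E _ _ Gb); apply: h0E; exact: hg.2.
case: (qz_inj hS hh) => H [HB HS]; exists H; split => // x a Gx.
by rewrite HS ?(h0E _ _ Gx) //; exists a.
Qed.

Lemma addsum (N M : zmodType) (H : N -> M) : (forall x y, H (x - y) = H x - H y) ->
  forall I (r : seq I) (F : I -> N), H (\sum_(i <- r) F i) = \sum_(i <- r) H (F i).
Proof.
move=> HB.
have H0 : H 0 = 0 by rewrite -(subrr 0) HB subrr.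
have HN z : H (- z) = - H z by have := HB 0 z; rewrite sub0r H0 sub0r.
have HD x y : H (x + y) = H x + H y by have := HB x (- y); rewrite opprK HN opprK.
move=> I r F; elim: r => [|a r IH]; first by rewrite !big_nil.
by rewrite !big_cons HD IH.
Qed.

Section Addf.
Variable R : pzRingType.

Record addf := AddF { af :> R -> qz; afB : forall x y, af (x - y) = af x - af y }.

Lemma addf_ext (f g : addf) : (forall r, f r = g r) -> f = g.
Proof.
case: f g => f hf [g hg] /= e.
have efg : f = g by apply: boolp.funext.
subst g; congr AddF; exact: boolp.Prop_irrelevance.
Qed.

HB.instance Definition _ := boolp.gen_eqMixin addf.
HB.instance Definition _ := boolp.gen_choiceMixin addf.

Lemma af0 (f : addf) : f 0 = 0.
Proof. by rewrite -(subrr 0) afB subrr. Qed.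
Lemma afN (f : addf) x : f (- x) = - f x.
Proof. by rewrite -sub0r afB af0 sub0r. Qed.
Lemma afD (f : addf) x y : f (x + y) = f x + f y.
Proof. by have := afB f x (- y); rewrite opprK afN opprK. Qed.

Lemma af_add_sub (f g : addf) x y : (fun r => f r + g r) (x - y) = (fun r => f r + g r) x - (fun r => f r + g r) y.
Proof. by rewrite /= !afB opprD addrACA. Qed.
Definition af_add (f g : addf) := AddF (af_add_sub f g).
Lemma af_opp_sub (f : addf) x y : (fun r => - f r) (x - y) = (fun r => - f r) x - (fun r => - f r) y.
Proof. by rewrite /= !afB opprB addrC opprK. Qed.
Definition af_opp (f : addf) := AddF (af_opp_sub f).
Lemma af_zero_sub x y : (fun r : R => 0 : qz) (x - y) = (fun r : R => 0 : qz) x - (fun r : R => 0 : qz) y.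
Proof. by rewrite subr0. Qed.
Definition af_zero := AddF af_zero_sub.

Lemma af_addA : associative af_add.
Proof. by move=> f g h; apply: addf_ext => r /=; rewrite addrA. Qed.
Lemma af_addC : commutative af_add.
Proof. by move=> f g; apply: addf_ext => r /=; rewrite addrC. Qed.
Lemma af_add0 : left_id af_zero af_add.
Proof. by move=> f; apply: addf_ext => r /=; rewrite add0r. Qed.
Lemma af_addN : left_inverse af_zero af_opp af_add.
Proof. by move=> f; apply: addf_ext => r /=; rewrite addNr. Qed.

HB.instance Definition _ := GRing.isZmodule.Build addf af_addA af_addC af_add0 af_addN.

Lemma af_scale_sub (a : R^c) (f : addf) x y : (fun r => f ((a : R) * r)) (x - y) = (fun r => f ((a : R) * r)) x - (fun r => f ((a : R) * r)) y.
Proof. by rewrite /= mulrBr afB. Qed.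
Definition af_scale (a : R^c) (f : addf) := AddF (af_scale_sub a f).

Lemma af_scaleA a b v : af_scale a (af_scale b v) = af_scale (a * b) v.
Proof. by apply: addf_ext => r /=; rewrite mulrA. Qed.
Lemma af_scale1 : left_id 1 af_scale.
Proof. by move=> f; apply: addf_ext => r /=; rewrite mul1r. Qed.
Lemma af_scaleDr : right_distributive af_scale +%R.
Proof. by move=> a f g; apply: addf_ext => r /=. Qed.
Lemma af_scaleDl v : {morph af_scale^~ v : a b / a + b}.
Proof. by move=> a b; apply: addf_ext => r /=; rewrite mulrDl afD. Qed.

HB.instance Definition _ := GRing.Zmodule_isLmodule.Build R^c addf af_scaleA af_scale1 af_scaleDr af_scaleDl.

Lemma af_scaleE (a : R^c) (f : addf) r : (a *: f) r = f ((a : R) * r).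
Proof. by []. Qed.
Lemma af_addE (f g : addf) r : (f + g) r = f r + g r.
Proof. by []. Qed.

End Addf.

Section Rlin.
Variables (K : pzRingType) (M N : lmodType K) (f : M -> N) (hf : Rlinear f).
Lemma Rlin0 : f 0 = 0.
Proof. have := hf 1 0 0; rewrite !scale1r addr0 => e; apply: (addrI (f 0)); by rewrite addr0 -e. Qed.
Lemma RlinD x y : f (x + y) = f x + f y.
Proof. by have := hf 1 x y; rewrite !scale1r. Qed.
Lemma RlinZ a x : f (a *: x) = a *: f x.
Proof. by have := hf a x 0; rewrite !addr0 Rlin0 addr0. Qed.
Lemma RlinN x : f (- x) = - f x.
Proof. by rewrite -scaleN1r RlinZ scaleN1r. Qed.
Lemma RlinB x y : f (x - y) = f x - f y.
Proof. by rewrite RlinD RlinN. Qed.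
Lemma Rlin_sum I (r : seq I) (P : pred I) (F : I -> M) :
  f (\sum_(i <- r | P i) F i) = \sum_(i <- r | P i) f (F i).
Proof.
elim: r => [|a r IH]; first by rewrite !big_nil Rlin0.
by rewrite !big_cons; case: (P a); rewrite ?RlinD IH.
Qed.
End Rlin.

Lemma addf_injective (R : pzRingType) : injective_rmod (addf R).
Proof.
move=> M N j g hj jinj hg.
pose S0 y := exists m, j m = y.
have hS : subgrp S0.
  split; first by exists 0; rewrite Rlin0.
  by move=> _ _ [m1 <-] [m2 <-]; exists (m1 - m2); rewrite RlinB.
pose h0 (y : N) : qz := match excluded_middle_informative (S0 y) with
  | left e => g (proj1_sig (constructive_indefinite_description _ e)) 1 | right _ => 0 end.
have h0j m : h0 (j m) = g m 1.
  rewrite /h0; case: excluded_middle_informative => [e|[]]; last by exists m.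
  by case: constructive_indefinite_description => m' /= /jinj ->.
have hh0 : forall x y, S0 x -> S0 y -> h0 (x - y) = h0 x - h0 y.
  by move=> _ _ [m1 <-] [m2 <-]; rewrite -RlinB // !h0j RlinB // af_addE.
case: (qz_inj hS hh0) => H [HB Hj].
have H0 : H 0 = 0 by rewrite -(subrr 0) HB subrr.
have HD x y : H (x + y) = H x + H y.
  have HN z : H (- z) = - H z by have := HB 0 z; rewrite sub0r H0 sub0r.
  by have := HB x (- y); rewrite opprK HN opprK.
have hhsub (y : N) r s : (fun r : R => H ((r : R^c) *: y)) (r - s) =
     (fun r : R => H ((r : R^c) *: y)) r - (fun r : R => H ((r : R^c) *: y)) s.
  by rewrite /= scalerBl HB.
exists (fun y => AddF (hhsub y)); split.
  move=> a x y; apply: addf_ext => r /=.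
  by rewrite scalerDr scalerA HD.
move=> m; apply: addf_ext => r /=.
rewrite -(RlinZ hj (r : R^c) m) Hj; last by exists ((r : R^c) *: m).
by rewrite h0j (RlinZ hg) af_scaleE mulr1.
Qed.

Notation V R k := {ffun 'I_k -> R^c^o}.

Definition Dmap (R : pzRingType) p m (A : 'M[R]_(p, m)) (v : V R m) : V R p :=
  [ffun l => \sum_(k < m) (A l k : R) * (v k : R)].

Section Im.
Variables (R : pzRingType) (p m : nat) (A : 'M[R]_(p, m)).

Lemma DmapD u v : Dmap A (u + v) = Dmap A u + Dmap A v.
Proof. by apply/ffunP => l; rewrite !ffunE -big_split; apply: eq_bigr => k _; rewrite !ffunE mulrDr. Qed.
Lemma DmapZ (a : R^c) u : Dmap A (a *: u) = a *: Dmap A u.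
Proof.
apply/ffunP => l; rewrite !ffunE.
change (\sum_(k < m) A l k * (a *: u) k = (\sum_(k < m) A l k * u k) * a).
rewrite big_distrl; apply: eq_bigr => k _; rewrite ffunE mulrA //.
Qed.
Lemma Dmap0 : Dmap A 0 = 0.
Proof. by apply/ffunP => l; rewrite !ffunE big1 // => k _; rewrite ffunE mulr0. Qed.

Record imv := IMV { iv :> V R p; ivP : exists v, iv = Dmap A v }.

Lemma imv_ext (f g : imv) : iv f = iv g -> f = g.
Proof.
case: f g => f hf [g hg] /= e; subst g; congr IMV; exact: boolp.Prop_irrelevance.
Qed.

HB.instance Definition _ := boolp.gen_eqMixin imv.
HB.instance Definition _ := boolp.gen_choiceMixin imv.

Lemma im_add_sub (f g : imv) : exists v, iv f + iv g = Dmap A v.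
Proof. case: (ivP f) => u ->; case: (ivP g) => v ->; exists (u + v); by rewrite DmapD. Qed.
Definition im_add f g := IMV (im_add_sub f g).
Lemma im_opp_sub (f : imv) : exists v, - iv f = Dmap A v.
Proof. case: (ivP f) => u ->; exists (- u); apply/ffunP => l; rewrite !ffunE -sumrN; apply: eq_bigr => k _; by rewrite !ffunE mulrN. Qed.
Definition im_opp f := IMV (im_opp_sub f).
Lemma im_zero_sub : exists v, (0 : V R p) = Dmap A v.
Proof. by exists 0; rewrite Dmap0. Qed.
Definition im_zero := IMV im_zero_sub.

Lemma im_addA : associative im_add.
Proof. by move=> f g h; apply: imv_ext; rewrite /= addrA. Qed.
Lemma im_addC : commutative im_add.
Proof. by move=> f g; apply: imv_ext; rewrite /= addrC. Qed.
Lemma im_add0 : left_id im_zero im_add.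
Proof. by move=> f; apply: imv_ext; rewrite /= add0r. Qed.
Lemma im_addN : left_inverse im_zero im_opp im_add.
Proof. by move=> f; apply: imv_ext; rewrite /= addNr. Qed.

HB.instance Definition _ := GRing.isZmodule.Build imv im_addA im_addC im_add0 im_addN.

Lemma im_scale_sub (a : R^c) (f : imv) : exists v, a *: iv f = Dmap A v.
Proof. case: (ivP f) => u ->; exists (a *: u); by rewrite DmapZ. Qed.
Definition im_scale a f := IMV (im_scale_sub a f).

Lemma im_scaleA a b v : im_scale a (im_scale b v) = im_scale (a * b) v.
Proof. by apply: imv_ext; rewrite /= scalerA. Qed.
Lemma im_scale1 : left_id 1 im_scale.
Proof. by move=> f; apply: imv_ext; rewrite /= scale1r. Qed.
Lemma im_scaleDr : right_distributive im_scale +%R.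
Proof. by move=> a f g; apply: imv_ext; rewrite /= scalerDr. Qed.
Lemma im_scaleDl v : {morph im_scale^~ v : a b / a + b}.
Proof. by move=> a b; apply: imv_ext; rewrite /= scalerDl. Qed.

HB.instance Definition _ := GRing.Zmodule_isLmodule.Build R^c imv im_scaleA im_scale1 im_scaleDr im_scaleDl.

Lemma iv_lin : Rlinear (iv : imv -> V R p).
Proof. by []. Qed.
Lemma iv_inj : injective (iv : imv -> V R p).
Proof. by move=> f g; apply: imv_ext. Qed.
End Im.

Section Free.
Variables (R : pzRingType) (Q : lmodType R).

Definition covers (f : Q -> R) (s : seq Q) := forall q, f q != 0 -> q \in s.

Lemma sum_cover (f : Q -> R) (s t : seq Q) : uniq s -> uniq t -> covers f s -> covers f t ->
  \sum_(q <- s) f q *: q = \sum_(q <- t) f q *: q.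
Proof.
move=> us ut cs ct.
have red (a b : seq Q) : covers f b -> \sum_(q <- a) f q *: q = \sum_(q <- [seq q <- a | q \in b]) f q *: q.
  move=> cb; rewrite big_filter [RHS]big_mkcond /=; apply: eq_bigr => q _.
  case: ifP => // qb; case: (f q =P 0) => [->|/eqP fq]; first by rewrite scale0r.
  by rewrite (cb _ fq) in qb.
rewrite (red s t ct) (red t s cs); apply: perm_big; apply: uniq_perm; rewrite ?filter_uniq //.
by move=> q; rewrite !mem_filter andbC.
Qed.

Record fsf := FSF { fv :> Q -> R; fvP : exists s : seq Q, covers fv s }.

Lemma fsf_ext (f g : fsf) : (forall q, f q = g q) -> f = g.
Proof.
case: f g => f hf [g hg] /= e.
have efg : f = g by apply: boolp.funext.
subst g; congr FSF; exact: boolp.Prop_irrelevance.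
Qed.

HB.instance Definition _ := boolp.gen_eqMixin fsf.
HB.instance Definition _ := boolp.gen_choiceMixin fsf.

Lemma fs_add_sub (f g : fsf) : exists s, covers (fun q => f q + g q) s.
Proof.
case: (fvP f) => s hs; case: (fvP g) => t ht; exists (s ++ t) => q /=.
rewrite mem_cat; case: (f q =P 0) => [->|/eqP /hs -> //]; rewrite add0r => /ht ->.
by rewrite orbT.
Qed.
Definition fs_add f g := FSF (fs_add_sub f g).
Lemma fs_opp_sub (f : fsf) : exists s, covers (fun q => - f q) s.
Proof. case: (fvP f) => s hs; exists s => q /=; rewrite oppr_eq0; exact: hs. Qed.
Definition fs_opp f := FSF (fs_opp_sub f).
Lemma fs_zero_sub : exists s, covers (fun q : Q => 0 : R) s.
Proof. by exists [::] => q /=; rewrite eqxx. Qed.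
Definition fs_zero := FSF fs_zero_sub.

Lemma fs_addA : associative fs_add.
Proof. by move=> f g h; apply: fsf_ext => q /=; rewrite addrA. Qed.
Lemma fs_addC : commutative fs_add.
Proof. by move=> f g; apply: fsf_ext => q /=; rewrite addrC. Qed.
Lemma fs_add0 : left_id fs_zero fs_add.
Proof. by move=> f; apply: fsf_ext => q /=; rewrite add0r. Qed.
Lemma fs_addN : left_inverse fs_zero fs_opp fs_add.
Proof. by move=> f; apply: fsf_ext => q /=; rewrite addNr. Qed.

HB.instance Definition _ := GRing.isZmodule.Build fsf fs_addA fs_addC fs_add0 fs_addN.

Lemma fs_scale_sub (a : R) (f : fsf) : exists s, covers (fun q => a * f q) s.
Proof.
case: (fvP f) => s hs; exists s => q /=; case: (f q =P 0) => [->|/eqP /hs //].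
by rewrite mulr0 eqxx.
Qed.
Definition fs_scale a f := FSF (fs_scale_sub a f).

Lemma fs_scaleA a b v : fs_scale a (fs_scale b v) = fs_scale (a * b) v.
Proof. by apply: fsf_ext => q /=; rewrite mulrA. Qed.
Lemma fs_scale1 : left_id 1 fs_scale.
Proof. by move=> f; apply: fsf_ext => q /=; rewrite mul1r. Qed.
Lemma fs_scaleDr : right_distributive fs_scale +%R.
Proof. by move=> a f g; apply: fsf_ext => q /=; rewrite mulrDr. Qed.
Lemma fs_scaleDl v : {morph fs_scale^~ v : a b / a + b}.
Proof. by move=> a b; apply: fsf_ext => q /=; rewrite mulrDl. Qed.

HB.instance Definition _ := GRing.Zmodule_isLmodule.Build R fsf fs_scaleA fs_scale1 fs_scaleDr fs_scaleDl.

Lemma fs_addE (f g : fsf) q : (f + g) q = f q + g q. Proof. by []. Qed.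
Lemma fs_scaleE a (f : fsf) q : (a *: f) q = a * f q. Proof. by []. Qed.
Lemma fs_zeroE q : (0 : fsf) q = 0. Proof. by []. Qed.
Lemma fs_sumE I (r : seq I) (P : pred I) (F : I -> fsf) q :
  (\sum_(i <- r | P i) F i) q = \sum_(i <- r | P i) F i q.
Proof.
elim: r => [|a r IH]; first by rewrite !big_nil.
by rewrite !big_cons; case: (P a); rewrite ?fs_addE IH.
Qed.

Definition sup (f : fsf) := undup (proj1_sig (constructive_indefinite_description _ (fvP f))).
Lemma sup_cover (f : fsf) : covers f (sup f).
Proof. rewrite /sup; case: constructive_indefinite_description => s hs q /hs /=; by rewrite mem_undup. Qed.

Definition psum (f : fsf) : Q := \sum_(q <- sup f) f q *: q.

Lemma psumE (f : fsf) s : uniq s -> covers f s -> psum f = \sum_(q <- s) f q *: q.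
Proof. move=> us cs; apply: sum_cover => //; [exact: undup_uniq | exact: sup_cover]. Qed.

Lemma psum_lin : Rlinear psum.
Proof.
move=> a f g.
pose s := undup (sup f ++ sup g).
have us : uniq s by exact: undup_uniq.
have cf : covers f s by move=> q /sup_cover qf; rewrite mem_undup mem_cat qf.
have cg : covers g s by move=> q /sup_cover qf; rewrite mem_undup mem_cat qf orbT.
have cfg : covers (a *: f + g) s.
  move=> q; rewrite fs_addE fs_scaleE.
  case: (f q =P 0) => [->|/eqP /cf //]; rewrite mulr0 add0r; exact: cg.
rewrite (psumE us cf) (psumE us cg) (psumE us cfg) scaler_sumr -big_split.
by apply: eq_bigr => q _; rewrite fs_addE fs_scaleE scalerDl scalerA.
Qed.

Lemma delta_sub (q0 : Q) : exists s, covers (fun q => if q == q0 then 1 else 0 : R) s.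
Proof. by exists [:: q0] => q /=; case: (q =P q0) => [->|_]; rewrite ?mem_seq1 ?eqxx. Qed.
Definition fdelta q0 := FSF (delta_sub q0).

Lemma psum_delta q0 : psum (fdelta q0) = q0.
Proof.
rewrite (@psumE _ [:: q0]) //; last by move=> q /=; case: (q =P q0) => [->|_]; rewrite ?mem_seq1 ?eqxx.
by rewrite big_seq1 /= eqxx scale1r.
Qed.

End Free.

Lemma lin_rv (R : pzRingType) (Q : lmodType R) k (f : 'rV[R]_k -> Q) :
  Rlinear f -> forall v, f v = \sum_j v 0 j *: f 'e_j.
Proof.
move=> fl v; rewrite {1}(row_sum_delta v) (Rlin_sum fl); apply: eq_bigr => j _.
exact: RlinZ.
Qed.

Lemma e_entry (R : pzRingType) k (i j : 'I_k) : ('e_i : 'rV[R]_k) 0 j = (i == j)%:R.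
Proof. by rewrite mxE eqxx /= eq_sym. Qed.

Lemma sum_e (R : pzRingType) k (i : 'I_k) (c : 'I_k -> R) : \sum_j ('e_i : 'rV[R]_k) 0 j * c j = c i.
Proof.
rewrite (bigD1 i) //= e_entry eqxx mul1r big1 ?addr0 // => j ji.
by rewrite e_entry eq_sym (negbTE ji) mul0r.
Qed.

Lemma eM_entry (R : pzRingType) m p (A : 'M[R]_(m, p)) i j : (('e_i : 'rV[R]_m) *m A) 0 j = A i j.
Proof. by rewrite -rowE mxE. Qed.

Lemma sum_swap (R : pzRingType) m p (a : 'I_m -> R) (M : 'I_m -> 'I_p -> R) (c : 'I_p -> R) :
  \sum_k (\sum_l a l * M l k) * c k = \sum_l a l * \sum_k M l k * c k.
Proof.
under eq_bigr do rewrite big_distrl.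
rewrite exchange_big; apply: eq_bigr => l _; rewrite big_distrr; apply: eq_bigr => k _.
by rewrite /= mulrA.
Qed.

Lemma sum_swapZ (R : pzRingType) (Q : lmodType R) m p (a : 'I_m -> R) (M : 'I_m -> 'I_p -> R) (x : 'I_p -> Q) :
  \sum_k a k *: \sum_j M k j *: x j = \sum_j (\sum_k a k * M k j) *: x j.
Proof.
under eq_bigr do rewrite scaler_sumr.
rewrite exchange_big; apply: eq_bigr => j _; rewrite scaler_suml; apply: eq_bigr => k _.
by rewrite scalerA.
Qed.

Lemma proj_Ro (R : pzRingType) : projective_lmod R^o.
Proof.
move=> M N p g pl ps gl; case: (ps (g 1)) => x px.
exists (fun r : R^o => (r : R) *: x); split.
  move=> a r s; change (((a * r + s) : R) *: x = a *: ((r : R) *: x) + (s : R) *: x :> M).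
  by rewrite scalerDl scalerA.
move=> q; rewrite (RlinZ pl) px -(RlinZ gl); congr g; exact: mulr1.
Qed.

Lemma sumc (R : pzRingType) m (F : 'I_m -> R) : (\sum_k (F k : R^c)) = (\sum_k F k : R).
Proof. by []. Qed.

Section Main.
Variables (R : pzRingType) (n : int -> nat) (D : forall i : int, 'M[R]_(n (i + 1), n i)).

Definition colex := forall i (c : 'I_(n (i + 1)) -> R),
  (forall l, \sum_k D (i + 1) l k * c k = 0) ->
  exists b : 'I_(n i) -> R, forall k, c k = \sum_j D i k j * b j.

Lemma DD0 : exact_free D -> forall i, D (i + 1) *m D i = 0.
Proof.
move=> H i; apply/matrixP => l j; have := (H i).1 'e_l.
by rewrite -mulmxA => /matrixP /(_ 0 j); rewrite -rowE !mxE.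
Qed.

Lemma DD0e : exact_free D -> forall i l j, \sum_k D (i + 1) l k * D i k j = 0.
Proof. by move=> H i l j; have /matrixP /(_ l j) := DD0 H i; rewrite !mxE. Qed.

Lemma P1_colex : hom_exact D R^o -> colex.
Proof.
move=> H i c hc.
pose g (v : 'rV[R]_(n (i + 1))) : R^o := \sum_k v 0 k * c k.
have gl : Rlinear g.
  move=> a x y; rewrite /g.
  change (\sum_k (a *: x + y) 0 k * c k = a * (\sum_k x 0 k * c k) + \sum_k y 0 k * c k).
  rewrite mulr_sumr -big_split; apply: eq_bigr => k _; rewrite !mxE mulrDl mulrA //.
have gv u : g (u *m D (i + 1)) = 0.
  rewrite /g; under eq_bigr do rewrite mxE.
  by rewrite sum_swap big1 // => l _; rewrite hc mulr0.
case: ((H i).2 g gl gv) => f [fl fe].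
exists (fun j => f 'e_j) => k.
have := fe 'e_k; rewrite /g sum_e => ->; rewrite (lin_rv fl); apply: eq_bigr => j _.
by rewrite eM_entry.
Qed.

Lemma colex_P1 : exact_free D -> colex -> hom_exact D R^o.
Proof.
move=> hex H i; split.
  by move=> f fl u; rewrite -mulmxA DD0 // mulmx0 (Rlin0 fl).
move=> g gl gv.
pose c k := g 'e_k.
have hc l : \sum_k D (i + 1) l k * c k = 0.
  transitivity (g ('e_l *m D (i + 1))); last exact: gv.
  by rewrite (lin_rv gl); apply: eq_bigr => k _; rewrite eM_entry.
case: (H i c hc) => b hb.
exists (fun w : 'rV[R]_(n i) => \sum_j w 0 j * b j : R^o); split.
  move=> a x y.
  change (\sum_k (a *: x + y) 0 k * b k = a * (\sum_k x 0 k * b k) + \sum_k y 0 k * b k).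
  rewrite mulr_sumr -big_split; apply: eq_bigr => k _; rewrite !mxE mulrDl mulrA //.
move=> v; rewrite (lin_rv gl v).
change (\sum_k v 0 k * c k = \sum_j (v *m D i) 0 j * b j).
under [RHS]eq_bigr do rewrite mxE.
by rewrite sum_swap; apply: eq_bigr => k _; rewrite hb.
Qed.

Lemma colex_P2 : exact_free D -> colex ->
  forall Q : lmodType R, projective_lmod Q -> hom_exact D Q.
Proof.
move=> hex H Q hQ i; split.
  by move=> f fl u; rewrite -mulmxA DD0 // mulmx0 (Rlin0 fl).
move=> g gl gv.
have idl : Rlinear (id : Q -> Q) by [].
have psurj : forall q : Q, exists x : fsf Q, psum x = q.
  by move=> q; exists (fdelta q); exact: psum_delta.
have [h [hl hp]] := hQ (fsf Q) Q (@psum R Q) id (@psum_lin R Q) psurj idl.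
pose phi k := h (g 'e_k).
have hphi l : \sum_k D (i + 1) l k *: phi k = 0.
  transitivity (h (g ('e_l *m D (i + 1)))); last by rewrite gv (Rlin0 hl).
  rewrite (lin_rv gl) (Rlin_sum hl); apply: eq_bigr => k _.
  by rewrite (RlinZ hl) eM_entry.
have hcs s l : \sum_k D (i + 1) l k * phi k s = 0.
  by have := congr1 (fun f : fsf Q => f s) (hphi l); rewrite fs_sumE.
have hb s : exists b : 'I_(n i) -> R, forall k, phi k s = \sum_j D i k j * b j.
  exact: (H i (fun k => phi k s) (hcs s)).
pose bf s : 'I_(n i) -> R :=
  if excluded_middle_informative (forall k, phi k s = 0) then (fun _ => 0)
  else proj1_sig (constructive_indefinite_description _ (hb s)).
have hbf s k : phi k s = \sum_j D i k j * bf s j.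
  rewrite /bf; destruct (excluded_middle_informative _) as [z|nz].
    by rewrite z big1 // => j _; rewrite mulr0.
  by case: constructive_indefinite_description.
have bsupp s j : bf s j != 0 -> exists k, phi k s != 0.
  rewrite /bf; destruct (excluded_middle_informative _) as [z|nz]; first by rewrite eqxx.
  move=> _; apply: NNPP => nex; apply: nz => k; apply/eqP; apply: NNPP => hk.
  by apply: nex; exists k; apply/negP.
pose L := flatten [seq sup (phi k) | k <- enum 'I_(n (i + 1))].
have psisub j : exists s, covers (fun q => bf q j) s.
  exists L => q /bsupp [k hk]; apply/flatten_mapP; exists k; first by rewrite mem_enum.
  exact: sup_cover.
pose psi j := FSF (psisub j).
have phiE k : phi k = \sum_j D i k j *: psi j.
  by apply: fsf_ext => s; rewrite fs_sumE hbf.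
exists (fun w : 'rV[R]_(n i) => \sum_j w 0 j *: psum (psi j)); split.
  move=> a x y; rewrite scaler_sumr -big_split; apply: eq_bigr => j _.
  by rewrite !mxE scalerDl scalerA.
move=> v; rewrite (lin_rv gl v).
have gE k : g 'e_k = \sum_j D i k j *: psum (psi j).
  by rewrite -[LHS]hp -/(phi k) phiE (Rlin_sum (@psum_lin R Q)); apply: eq_bigr => j _; rewrite (RlinZ (@psum_lin R Q)).
under eq_bigr do rewrite gE.
by rewrite sum_swapZ; apply: eq_bigr => j _; rewrite mxE.
Qed.

Lemma tens_part1 : exact_free D -> forall (I : lmodType R^c) i (u : 'I_(n (i + 1 + 1)) -> I) j,
  tens_map (D i) (tens_map (D (i + 1)) u) j = 0.
Proof.
move=> hex I i u j; rewrite /tens_map.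
rewrite (sum_swapZ (fun k => (D i k j : R^c)) (fun k l => (D (i + 1) l k : R^c))).
apply: big1 => l _.
have -> : \sum_k ((D i k j : R^c) * (D (i + 1) l k : R^c)) = (0 : R^c).
  rewrite sumc; transitivity (\sum_k D (i + 1) l k * D i k j); [by apply: eq_bigr | exact: (DD0e hex l j)].
by rewrite scale0r.
Qed.

Definition ev k (l : 'I_k) : V R k := [ffun l' => ((l' == l)%:R : R)].

Lemma colex_P3 : exact_free D -> colex ->
  forall I : lmodType R^c, injective_rmod I -> tensor_exact D I.
Proof.
move=> hex H I hI i; split; first exact: tens_part1.
move=> x hx.
pose Phi (v : V R (n (i + 1))) : I := \sum_k ((v k : R) : R^c) *: x k.
have Phil : Rlinear Phi.
  move=> a v w; rewrite /Phi scaler_sumr -big_split; apply: eq_bigr => k _.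
  by rewrite !ffunE scalerDl scalerA.
have PhiK (b : V R (n i)) : Phi (Dmap (D i) b) = 0.
  transitivity (\sum_j ((b j : R) : R^c) *: tens_map (D i) x j).
    rewrite /tens_map sum_swapZ; apply: eq_bigr => k _; rewrite ffunE; congr (_ *: _).
  by apply: big1 => j _; rewrite hx scaler0.
have PhiWD v v' : Dmap (D (i + 1)) v = Dmap (D (i + 1)) v' -> Phi v = Phi v'.
  move=> e; apply/eqP; rewrite -subr_eq0 -(RlinB Phil); apply/eqP.
  have hc l : \sum_k D (i + 1) l k * (v - v') k = 0.
    have := congr1 (fun f : V R (n (i + 1 + 1)) => f l) e; rewrite !ffunE => e'.
    under eq_bigr do rewrite !ffunE mulrDr mulrN. by rewrite big_split /= sumrN e' subrr.
  case: (H i _ hc) => b hb.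
  have -> : v - v' = Dmap (D i) [ffun j => b j].
    by apply/ffunP => k; rewrite hb ffunE; apply: eq_bigr => j _; rewrite ffunE.
  exact: PhiK.
pose g (w : imv (D (i + 1))) : I :=
  Phi (proj1_sig (constructive_indefinite_description _ (ivP w))).
have gE w v : iv w = Dmap (D (i + 1)) v -> g w = Phi v.
  move=> e; rewrite /g; case: constructive_indefinite_description => v' /= e'.
  by apply: PhiWD; rewrite -e -e'.
have gl : Rlinear g.
  move=> a w1 w2; case: (ivP w1) => v1 e1; case: (ivP w2) => v2 e2.
  rewrite (gE w1 v1 e1) (gE w2 v2 e2) -Phil; apply: gE.
  by rewrite DmapD DmapZ -e1 -e2.
have [hh [hhl hhE]] := hI _ _ _ g (@iv_lin _ _ _ (D (i + 1))) (@iv_inj _ _ _ (D (i + 1))) gl.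
exists (fun l => hh (ev l)) => k.
have emE : (\sum_l ((D (i + 1) l k : R) : R^c) *: ev l) = Dmap (D (i + 1)) (ev k).
  apply/ffunP => l'; rewrite !ffunE sum_ffunE.
  have L1 : \sum_l (((D (i + 1) l k : R) : R^c) *: ev l) l' = D (i + 1) l' k.
    rewrite (bigD1 l') //= big1 ?addr0; first by rewrite ffunE ffunE eqxx; change ((1 : R) * D (i + 1) l' k = D (i + 1) l' k); exact: mul1r.
    move=> l nl; rewrite ffunE ffunE eq_sym (negbTE nl); change ((0 : R) * D (i + 1) l k = 0); exact: mul0r.
  have L2 : \sum_k' D (i + 1) l' k' * (ev k k' : R) = D (i + 1) l' k.
    rewrite (bigD1 k) //= big1 ?addr0; first by rewrite ffunE eqxx mulr1.
    by move=> k' nk; rewrite ffunE (negbTE nk) mulr0.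
  by rewrite L1 L2.
rewrite /tens_map; under eq_bigr do rewrite -(RlinZ hhl).
rewrite -(Rlin_sum hhl) (hhE (IMV (ex_intro _ (ev k) emE))) (gE _ (ev k)) //.
rewrite /Phi (bigD1 k) //= big1 ?addr0; first by rewrite ffunE eqxx scale1r.
by move=> k' nk; rewrite ffunE (negbTE nk) scale0r.
Qed.

Lemma af_sumE (I : Type) (r : seq I) (F : I -> addf R) x :
  (\sum_(i <- r) F i) x = \sum_(i <- r) F i x.
Proof.
elim: r => [|a r IH]; first by rewrite !big_nil.
by rewrite !big_cons af_addE IH.
Qed.

Definition dl k (l : 'I_k) (r : R) : V R k := [ffun l' => if l' == l then r else 0].

Lemma dl_sum m (F : 'I_m -> R) l : (\sum_k dl k (F k)) l = F l.
Proof.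
rewrite sum_ffunE (bigD1 l) //= big1 ?addr0; first by rewrite ffunE eqxx.
by move=> k nk; rewrite ffunE eq_sym (negbTE nk).
Qed.

Lemma P3_colex : (forall I : lmodType R^c, injective_rmod I -> tensor_exact D I) -> colex.
Proof.
move=> P3 i c hc; apply: NNPP => nb.
pose K (w : V R (n (i + 1))) := exists b : 'I_(n i) -> R, forall k, (w k : R) = \sum_j D i k j * b j.
pose cv : V R (n (i + 1)) := [ffun k => c k].
have hK : subgrp K.
  split; first by exists (fun _ => 0) => k; rewrite ffunE big1 // => j _; rewrite mulr0.
  move=> x y [b1 hx] [b2 hy]; exists (fun j => b1 j - b2 j) => k.
  by rewrite !ffunE hx hy -sumrB; apply: eq_bigr => j _; rewrite mulrBr.
have hJ : subgrp (fun t : int => K (cv *~ t)).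
  split; first by rewrite mulr0z; exact: hK.1.
  by move=> t1 t2 k1 k2; rewrite mulrzBr; exact: hK.2.
case: (int_subgrp hJ) => d [Jd hd].
have d1 : d != 1%N.
  apply/eqP => d1; rewrite d1 mulr1z in Jd; case: Jd => b hb; apply: nb; exists b => k.
  by have := hb k; rewrite ffunE.
case: (qz_tor d1) => xi [xi0 xid].
pose G0 (p : V R (n (i + 1)) * qz) := K p.1 /\ p.2 = 0.
have gG0 : grp G0.
  split; first by split; [exact: hK.1 | done].
  move=> x a y b [Kx ea] [Ky eb]; simpl in *; split; first exact: hK.2.
  by rewrite /= ea eb subrr.
have fG0 : fun0 G0 by move=> a [].
have hxi : forall t b, G0 (cv *~ t, b) -> b = xi *~ t.
  move=> t b [Kt eb]; simpl in Kt, eb; rewrite eb; case: (hd t Kt) => q ->.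
  by rewrite mulrC mulrzA -pmulrn xid mul0rz.
have [H [HB HG]] := qz_inj_graph (gext_grp cv xi gG0) (gext_fun0 gG0 fG0 hxi).
have HK w : K w -> H w = 0.
  move=> Kw; apply: HG; exists w, 0, 0; split; first by split.
  by rewrite !mulr0z !addr0.
have Hc : H cv = xi.
  apply: HG; exists 0, 0, 1; split; first by split; [exact: hK.1 | done].
  by rewrite !add0r.
have dlsub k r s : (fun r => H (dl k r)) (r - s) = (fun r => H (dl k r)) r - (fun r => H (dl k r)) s.
  rewrite /= -HB; congr H; apply/ffunP => l; rewrite !ffunE.
  by case: (l == k); rewrite ?subrr.
pose xk k : addf R := AddF (dlsub k).
have hx j : tens_map (D i) xk j = 0.
  apply: addf_ext => r; rewrite /tens_map af_sumE.
  transitivity (H (\sum_k dl k (D i k j * r))).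
    by rewrite (addsum HB); apply: eq_bigr => k _; rewrite af_scaleE.
  apply: HK; exists (fun j' => if j' == j then r else 0) => k.
  rewrite dl_sum (bigD1 j) //= eqxx big1 ?addr0 // => j' nj.
  by rewrite (negbTE nj) mulr0.
case: ((P3 _ (@addf_injective R) i).2 xk hx) => u hu.
apply: (negP xi0); apply/eqP; rewrite -Hc.
have -> : cv = \sum_k dl k (c k) by apply/ffunP => l; rewrite dl_sum ffunE.
rewrite (addsum HB).
transitivity (\sum_k (tens_map (D (i + 1)) u k) (c k)).
  by apply: eq_bigr => k _; rewrite hu.
rewrite /tens_map; under eq_bigr do rewrite af_sumE.
rewrite exchange_big big1 // => l _.
rewrite -(addsum (@afB _ (u l))) -(af0 (u l)); congr (u l _).
exact: hc.
Qed.

End Main.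

Unset Implicit Arguments.

Theorem lemma3p4 (R : pzRingType) (n : int -> nat)
    (D : forall i : int, 'M[R]_(n (i + 1), n i)) :
  exact_free D ->
  [/\ (hom_exact D R^o <-> (forall Q : lmodType R, projective_lmod Q -> hom_exact D Q)),
      ((forall Q : lmodType R, projective_lmod Q -> hom_exact D Q) <->
       (forall I : lmodType R^c, injective_rmod I -> tensor_exact D I)) &
      ((forall I : lmodType R^c, injective_rmod I -> tensor_exact D I) <->
       hom_exact D R^o)].
Proof.
move=> hex.
have P12 : hom_exact D R^o -> forall Q : lmodType R, projective_lmod Q -> hom_exact D Q.
  by move=> h; apply: colex_P2 => //; apply: P1_colex.
have P21 : (forall Q : lmodType R, projective_lmod Q -> hom_exact D Q) -> hom_exact D R^o.
  by move=> h; apply: h; apply: proj_Ro.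
have P13 : hom_exact D R^o -> forall I : lmodType R^c, injective_rmod I -> tensor_exact D I.
  by move=> h; apply: colex_P3 => //; apply: P1_colex.
have P31 : (forall I : lmodType R^c, injective_rmod I -> tensor_exact D I) -> hom_exact D R^o.
  by move=> h; apply: colex_P1 => //; apply: P3_colex.
split; split; auto.
Qed.
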